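(* Let $i \geq 1$ and let $\psi$ be an $i$-nice $n$-dimensional unique sink orientation. Started at any vertex of $\psi$, the Random Edge algorithm performs an expected number of at most $O(n^{i+1})$ steps (before reaching the global sink).
   Context: Let $Q^n = 2^{[n]}$ be the vertex set of the $n$-cube, with $u,v$ adjacent iff $|u\oplus v|=1$; faces are $F_{J,v}=\{u : v\oplus u\subseteq J\}$ for $J\subseteq[n]$. A unique sink orientation (USO) is an orientation of the cube's edges such that every nonempty face has a unique sink (vertex with no outgoing edges within the face). The outmap $s_\psi(v)$ is the set of coordinates $j$ such that the edge $\{v,v\oplus\{j\}\}$ is directed away from $v$; the global sink is the vertex $t$ with $s_\psi(t)=\emptyset$. Write $v\rightsquigarrow u$ if there is a directed path from $v$ to $u$, and let $d(v,u)$ be the length of a shortest directed path from $v$ to $u$ ($\infty$ if none). The reachmap is $r_\psi(v)=s_\psi(v)\cup\{j : \exists u,\ v\rightsquigarrow u,\ j\in s_\psi(u)\}$. A vertex $v$ is $i$-covered by $u$ if $d(v,u)\le i$ and $r_\psi(u)\subsetneq r_\psi(v)$. The USO is $i$-nice if every vertex other than the global sink is $i$-covered by some vertex. Random Edge: at the current vertex, if it is not the global sink, choose an outgoing edge uniformly at random and move to its other endpoint; repeat. *)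

(* Defs.v *)
From mathcomp Require Import all_boot all_order all_algebra.
Set Implicit Arguments. Unset Strict Implicit. Unset Printing Implicit Defensive.
Import Order.TTheory GRing.Theory Num.Theory.

(* Vertices of the n-cube Q^n = 2^[n] : subsets of 'I_n. *)
Notation vertex n := {set 'I_n}.

Definition symd (n : nat) (u v : vertex n) : vertex n := (u :\: v) :|: (v :\: u).

(* An orientation of the cube is given by its outmap s : s v = set of
   coordinates j such that the edge {v, v (+) {j}} is directed away from v.
   Consistency: each edge is directed in exactly one way. *)
Definition is_orientation (n : nat) (s : vertex n -> vertex n) : Prop :=
  forall (v : vertex n) (j : 'I_n), (j \in s v) = (j \notin s (symd v [set j])).

Definition face (n : nat) (J v : vertex n) : {set vertex n} :=
  [set u | symd v u \subset J].

(* u is a sink of the face F_{J,v}: no outgoing edges within the face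
   (the edges of the face at u are exactly those in directions j in J). *)
Definition face_sink (n : nat) (s : vertex n -> vertex n) (J v u : vertex n) : bool :=
  (u \in face J v) && (s u :&: J == set0).

Definition is_uso (n : nat) (s : vertex n -> vertex n) : Prop :=
  is_orientation s /\
  forall J v : vertex n, exists! u : vertex n, face_sink s J v u.

Definition dedge (n : nat) (s : vertex n -> vertex n) : rel (vertex n) :=
  fun u w => [exists j : 'I_n, (j \in s u) && (w == symd u [set j])].

Definition dist_le (n : nat) (s : vertex n -> vertex n) (k : nat) (v u : vertex n) : Prop :=
  exists p : seq (vertex n), [/\ path (dedge s) v p, last v p = u & size p <= k].

Definition reachmap (n : nat) (s : vertex n -> vertex n) (v : vertex n) : vertex n :=
  s v :|: \bigcup_(u | connect (dedge s) v u) s u.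

Definition covered_by (n : nat) (s : vertex n -> vertex n) (i : nat) (v u : vertex n) : Prop :=
  dist_le s i v u /\ reachmap s u \proper reachmap s v.

Definition nice (n : nat) (s : vertex n -> vertex n) (i : nat) : Prop :=
  forall v : vertex n, s v != set0 -> exists u : vertex n, covered_by s i v u.

Local Open Scope ring_scope.

(* Transition probabilities of Random Edge (the global sink is absorbing). *)
Definition re_trans (n : nat) (s : vertex n -> vertex n) (u w : vertex n) : rat :=
  if s u == set0 then (w == u)%:R
  else if dedge s u w then (#|s u|%:R)^-1 else 0.

Fixpoint re_prob (n : nat) (s : vertex n -> vertex n) (k : nat) (v w : vertex n) : rat :=
  match k with
  | 0 => (w == v)%:R
  | k'.+1 => \sum_(u : vertex n) re_prob s k' v u * re_trans s u w
  end.

(* P(T > k): probability that after k steps the walk has not yet reached the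
   global sink (T = number of steps until reaching the global sink). *)
Definition re_tail (n : nat) (s : vertex n -> vertex n) (v : vertex n) (k : nat) : rat :=
  \sum_(w : vertex n | s w != set0) re_prob s k v w.

(* Partial sums of the tail-sum formula E[T] = sum_{k>=0} P(T > k). *)
Definition re_expected_partial (n : nat) (s : vertex n -> vertex n) (v : vertex n) (K : nat) : rat :=
  \sum_(k < K) re_tail s v k.

(* Main.v *)
Require Import Defs.
From mathcomp Require Import all_boot all_order all_algebra.
From mathcomp Require Import lra.
Import Order.TTheory GRing.Theory Num.Theory.
Local Open Scope ring_scope.
Set Implicit Arguments. Unset Strict Implicit.

Lemma trans_ge0 n (s : {set 'I_n} -> {set 'I_n}) u w : 0 <= re_trans s u w.
Proof.
rewrite /re_trans; case: ifP => _; first by rewrite ler0n.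
by case: ifP => _ //; rewrite invr_ge0 ler0n.
Qed.

Lemma trans_sum n (s : {set 'I_n} -> {set 'I_n}) u : \sum_w re_trans s u w <= 1.
Proof.
rewrite /re_trans; case H: (s u == set0) => /=.
  by rewrite (bigD1 u) //= eqxx big1 ?addr0 // => w /negbTE ->.
rewrite -big_mkcond /= sumr_const.
have Hc : (#|[pred w | dedge s u w]| <= #|s u|)%N.
  apply: leq_trans (leq_imset_card (fun j => symd u [set j]) (s u)).
  apply: subset_leq_card; apply/subsetP => w; rewrite inE /dedge.
  by case/existsP => j /andP[Hj /eqP ->]; apply: imset_f.
have Hp : 0 < #|s u|%:R :> rat by rewrite ltr0n card_gt0 H.
rewrite -[_ *+ _]mulr_natr ler_pdivrMl // mulr1 ler_nat.
by apply: leq_trans Hc; apply: subset_leq_card; apply/subsetP => w; rewrite !inE.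
Qed.


Lemma prob_ge0 n (s : {set 'I_n} -> {set 'I_n}) k v w : 0 <= re_prob s k v w.
Proof.
elim: k w => [|k IH] w /=; first by rewrite ler0n.
by apply: sumr_ge0 => u _; apply: mulr_ge0 => //; apply: trans_ge0.
Qed.

Lemma prob_sum n (s : {set 'I_n} -> {set 'I_n}) k v : \sum_w re_prob s k v w <= 1.
Proof.
elim: k => [|k IH] /=.
  by rewrite (bigD1 v) //= eqxx big1 ?addr0 // => w /negbTE ->.
rewrite exchange_big /=; apply: le_trans IH; apply: ler_sum => u _.
rewrite -mulr_sumr; rewrite -[X in _ <= X]mulr1; apply: ler_wpM2l.
  exact: prob_ge0.
exact: trans_sum.
Qed.

Lemma prob_CK n (s : {set 'I_n} -> {set 'I_n}) a b v w :
  re_prob s (a + b) v w = \sum_u re_prob s a v u * re_prob s b u w.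
Proof.
elim: b w => [|b IH] w.
  rewrite addn0 /= (bigD1 w) //= eqxx mulr1 big1 ?addr0 // => u /negbTE.
  by rewrite eq_sym => ->; rewrite mulr0.
rewrite addnS /=.
under eq_bigr => y _ do rewrite IH mulr_suml.
rewrite exchange_big /=; apply: eq_bigr => u _.
by rewrite mulr_sumr; apply: eq_bigr => y _; rewrite mulrA.
Qed.

Lemma prob1 n (s : {set 'I_n} -> {set 'I_n}) v w : re_prob s 1 v w = re_trans s v w.
Proof.
rewrite /= (bigD1 v) //= eqxx mul1r big1 ?addr0 // => u /negbTE.
by move=> ->; rewrite mul0r.
Qed.

Lemma prob_first n (s : {set 'I_n} -> {set 'I_n}) b v w :
  re_prob s b.+1 v w = \sum_u re_trans s v u * re_prob s b u w.
Proof.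
rewrite -add1n prob_CK; apply: eq_bigr => u _; by rewrite prob1.
Qed.


Lemma reach_dedge n (s : {set 'I_n} -> {set 'I_n}) u w :
  dedge s u w -> reachmap s w \subset reachmap s u.
Proof.
move=> Huw; rewrite /reachmap; apply/subsetP => j; rewrite !inE => /orP[Hj|].
  apply/orP; right; apply/bigcupP; exists w => //; exact: connect1.
case/bigcupP => x Hx Hj; apply/orP; right; apply/bigcupP; exists x => //.
by apply: connect_trans (connect1 Huw) Hx.
Qed.

Lemma trans_mono n (s : {set 'I_n} -> {set 'I_n}) u w :
  re_trans s u w != 0 -> reachmap s w \subset reachmap s u.
Proof.
rewrite /re_trans; case: (s u == set0).
  by case: (eqVneq w u) => [->|] _; rewrite ?subxx ?eqxx.
by case: ifP => [H _|]; [exact: reach_dedge | rewrite eqxx].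
Qed.

Lemma prob_mono n (s : {set 'I_n} -> {set 'I_n}) k v w :
  re_prob s k v w != 0 -> reachmap s w \subset reachmap s v.
Proof.
elim: k w => [|k IH] w /=.
  by case: (eqVneq w v) => [->|] _; rewrite ?subxx ?eqxx.
move=> H; have [u _ Hu] : exists2 u, true & re_prob s k v u * re_trans s u w != 0.
  apply/exists_inP; apply: contraNT H; rewrite negb_exists_in => /forall_inP H.
  by apply/eqP; apply: big1 => u _; apply/eqP/negbNE/H.
rewrite mulf_eq0 negb_or in Hu; case/andP: Hu => H1 H2.
exact: subset_trans (trans_mono H2) (IH _ H1).
Qed.

Lemma trans_lb n (s : {set 'I_n} -> {set 'I_n}) u w :
  dedge s u w -> n%:R^-1 <= re_trans s u w.
Proof.
move=> H; rewrite /re_trans H.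
have Hne : s u != set0.
  by apply/set0Pn; case/existsP: H => j /andP[Hj _]; exists j.
rewrite (negbTE Hne); have Hp : (0 < #|s u|)%N by rewrite card_gt0.
have Hle : (#|s u| <= n)%N by rewrite -[X in (_ <= X)%N]card_ord max_card.
rewrite lef_pV2 ?posrE ?ltr0n ?ler_nat //.
exact: leq_trans Hp Hle.
Qed.

Lemma path_lb n (s : {set 'I_n} -> {set 'I_n}) p w :
  path (dedge s) w p -> n%:R^-1 ^+ size p <= re_prob s (size p) w (last w p).
Proof.
elim: p w => [|x p IH] w; first by rewrite /= eqxx.
rewrite [path _ _ _]/= => /andP[Hx Hp].
change (size (x :: p)) with (size p).+1; change (last w (x :: p)) with (last x p).
rewrite prob_first (bigD1 x) //= exprS.
rewrite -[X in X <= _]addr0; apply: lerD; last first.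
  by apply: sumr_ge0 => y _; apply: mulr_ge0; [apply: trans_ge0|apply: prob_ge0].
apply: ler_pM.
- by rewrite invr_ge0 ler0n.
- by apply: exprn_ge0; rewrite invr_ge0 ler0n.
- exact: trans_lb.
exact: IH.
Qed.


Definition Phi n (s : {set 'I_n} -> {set 'I_n}) w : rat := (#|reachmap s w|)%:R.
Definition EE n (s : {set 'I_n} -> {set 'I_n}) k w : rat :=
  \sum_x re_prob s k w x * Phi s x.

Lemma Phi_le n (s : {set 'I_n} -> {set 'I_n}) w : Phi s w <= n%:R.
Proof. by rewrite /Phi ler_nat -[X in (_ <= X)%N]card_ord max_card. Qed.

Lemma EE_ge0 n (s : {set 'I_n} -> {set 'I_n}) k w : 0 <= EE s k w.
Proof. by apply: sumr_ge0 => x _; apply: mulr_ge0; [apply: prob_ge0|apply: ler0n]. Qed.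

Lemma EE_le n (s : {set 'I_n} -> {set 'I_n}) k w : EE s k w <= Phi s w.
Proof.
apply: (@le_trans _ _ (\sum_x re_prob s k w x * Phi s w)).
  apply: ler_sum => x _; have [->|H] := eqVneq (re_prob s k w x) 0.
    by rewrite !mul0r.
  apply: ler_wpM2l; first exact: prob_ge0.
  by rewrite /Phi ler_nat; apply: subset_leq_card; apply: prob_mono H.
rewrite -mulr_suml -[X in _ <= X]mul1r; apply: ler_wpM2r; first exact: ler0n.
exact: prob_sum.
Qed.

Lemma EE_CK n (s : {set 'I_n} -> {set 'I_n}) a b w :
  EE s (a + b) w = \sum_y re_prob s a w y * EE s b y.
Proof.
rewrite /EE; under eq_bigr => x _ do rewrite prob_CK mulr_suml.
rewrite exchange_big /=; apply: eq_bigr => y _; rewrite mulr_sumr.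
by apply: eq_bigr => x _; rewrite mulrA.
Qed.

Lemma EE_drift n (s : {set 'I_n} -> {set 'I_n}) i w :
  nice s i -> s w != set0 -> EE s i w <= Phi s w - n%:R^-1 ^+ i.
Proof.
move=> Hn Hw; have [u [[p [Hp Hl Hsz]] Hpr]] := Hn w Hw.
have n_gt0 : (0 < n)%N.
  case/set0Pn: Hw => j _; exact: leq_ltn_trans (leq0n _) (ltn_ord j).
have Hu : Phi s u <= Phi s w - 1.
  rewrite /Phi lerBrDr (_ : _ + 1 = (#|reachmap s u|.+1)%:R) ?ler_nat; [exact: proper_card | by rewrite -addn1 natrD].
have -> : i = (size p + (i - size p))%N by rewrite subnKC.
rewrite EE_CK.
apply: (@le_trans _ _ (\sum_y re_prob s (size p) w y * (Phi s w - (y == u)%:R))).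
  apply: ler_sum => y _; apply: (@le_trans _ _ (re_prob s (size p) w y * Phi s y)).
    by apply: ler_wpM2l; [apply: prob_ge0| apply: EE_le].
  have [->|H] := eqVneq y u.
    by apply: ler_wpM2l => //; apply: prob_ge0.
  have [->|H2] := eqVneq (re_prob s (size p) w y) 0; first by rewrite !mul0r.
  rewrite subr0; apply: ler_wpM2l; first exact: prob_ge0.
  by rewrite /Phi ler_nat; apply: subset_leq_card; apply: prob_mono H2.
under eq_bigr => y _ do rewrite mulrBr.
rewrite sumrB -mulr_suml.
have -> : \sum_y re_prob s (size p) w y * (y == u)%:R = re_prob s (size p) w u.
  rewrite (bigD1 u) //= eqxx mulr1 big1 ?addr0 //.
  by move=> y /negbTE ->; rewrite mulr0.
have Hq : n%:R^-1 ^+ (size p + (i - size p)) <= re_prob s (size p) w u.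
  rewrite -Hl; apply: le_trans (path_lb Hp); rewrite subnKC //.
  apply: ler_wiXn2l => //; first by rewrite invr_ge0 ler0n.
  by rewrite invf_le1 ?ler1n ?ltr0n.
apply: lerB => //; rewrite -[X in _ <= X]mul1r; apply: ler_wpM2r; last exact: prob_sum.
exact: ler0n.
Qed.

Lemma EE_drift' n (s : {set 'I_n} -> {set 'I_n}) i w :
  nice s i -> EE s i w <= Phi s w - n%:R^-1 ^+ i * (s w != set0)%:R.
Proof.
move=> Hn; case: (boolP (s w != set0)) => H.
  by rewrite mulr1; apply: EE_drift.
by rewrite mulr0 subr0; apply: EE_le.
Qed.


Lemma step_ineq n (s : {set 'I_n} -> {set 'I_n}) i v k : nice s i ->
  EE s (k + i) v <= EE s k v - n%:R^-1 ^+ i * re_tail s v k.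
Proof.
move=> Hn; rewrite EE_CK.
apply: (@le_trans _ _ (\sum_y re_prob s k v y * (Phi s y - n%:R^-1 ^+ i * (s y != set0)%:R))).
  by apply: ler_sum => y _; apply: ler_wpM2l; [apply: prob_ge0|apply: EE_drift'].
under eq_bigr => y _ do rewrite mulrBr.
rewrite sumrB /EE /re_tail; apply: lerB => //.
rewrite mulr_sumr [X in X <= _]big_mkcond /=; apply: ler_sum => y _.
by case: (s y != set0); rewrite ?mulr1 ?mulr0 // mulrC.
Qed.

Definition bb n (s : {set 'I_n} -> {set 'I_n}) i v K := \sum_(j < i) EE s (K + j) v.

Lemma telescope n (s : {set 'I_n} -> {set 'I_n}) i v K : nice s i ->
  n%:R^-1 ^+ i * re_expected_partial s v K + bb s i v K <= bb s i v 0.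
Proof.
move=> Hn; elim: K => [|K IH].
  by rewrite /re_expected_partial big_ord0 mulr0 add0r.
apply: le_trans IH; rewrite /re_expected_partial big_ord_recr /= mulrDr -addrA lerD2l.
have H1 : \sum_(j < i.+1) EE s (K + j) v = EE s K v + bb s i v K.+1.
  by rewrite big_ord_recl addn0 /bb; congr (_ + _); apply: eq_bigr => j _; rewrite addSnnS.
have H2 : \sum_(j < i.+1) EE s (K + j) v = bb s i v K + EE s (K + i) v.
  by rewrite big_ord_recr.
have := step_ineq v K Hn; move: H1 H2.
set A := EE s K v; set B := EE s (K + i) v; set T := _ * re_tail s v K.
move=> H1 H2 H3; rewrite H2 in H1.
lra.
Qed.

Unset Implicit Arguments. Set Strict Implicit.

Theorem theorem4 (i : nat) (hi : (1 <= i)%N) :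
  exists C : rat, 0 < C /\
    forall (n : nat) (s : {set 'I_n} -> {set 'I_n}),
      is_uso s -> nice s i ->
      forall (v : {set 'I_n}) (K : nat),
        re_expected_partial s v K <= C * (n%:R) ^+ i.+1.
Proof.
exists i%:R; split; first by rewrite ltr0n.
move=> n s _ Hn v K.
case: n s Hn v => [|n] s Hn v.
  rewrite /re_expected_partial big1 ?mul0r ?expr0n //= ?mulr0 // => k _.
  rewrite /re_tail big1 // => w.
  have -> : s w = set0 by apply/setP => -[m Hm]; exfalso; rewrite ltn0 in Hm.
  by rewrite eqxx.
have Hb0 : bb s i v 0 <= i%:R * n.+1%:R.
  rewrite /bb (_ : i%:R * _ = \sum_(j < i) n.+1%:R); last by rewrite sumr_const card_ord mulr_natl.
  apply: ler_sum => j _.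
  apply: le_trans (EE_le _ _ _) (Phi_le _ _).
have Hbk : 0 <= bb s i v K by apply: sumr_ge0 => j _; apply: EE_ge0.
have Ht := telescope v K Hn.
have Hq : n.+1%:R ^+ i * n.+1%:R^-1 ^+ i = 1 :> rat.
  by rewrite -exprMn divff ?expr1n // pnatr_eq0.
set E := re_expected_partial s v K in Ht *.
have HqE : n.+1%:R^-1 ^+ i * E <= i%:R * n.+1%:R.
  by apply: le_trans Hb0; apply: le_trans Ht; rewrite lerDl.
have Hp : 0 <= n.+1%:R ^+ i :> rat by apply: exprn_ge0; apply: ler0n.
have -> : E = n.+1%:R ^+ i * (n.+1%:R^-1 ^+ i * E) by rewrite mulrA Hq mul1r.
apply: le_trans (ler_wpM2l Hp HqE) _.
by rewrite exprSr mulrCA mulrA.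
Qed.
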